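(* Consider the weak interface treatment below for the transformed two-phase evaporation problem, with the outer boundary terms ignored. Let the penalty coefficients be chosen as follows: if $(a_v)_\delta < 0$: $\sigma_v^1=\beta_v (a_v)_\delta$, $\sigma_l^1=0$, $\sigma_v^2=\sigma_l^2=-\sigma/2 \leq 0$, $\sigma_v^3 = -k_v J_v^{-1}$, $\sigma_l^3 = k_l J_l^{-1}$; if $(a_v)_\delta > 0$: $\sigma_v^1=0$, $\sigma_l^1=-\beta_l (a_l)_\delta$, $\sigma_v^2=\sigma_l^2=-\sigma/2 \leq 0$, $\sigma_v^3 = -k_v J_v^{-1}$, $\sigma_l^3 = k_l J_l^{-1}$; if $(a_v)_\delta=0$: $\sigma_v^1=\sigma_l^1=0$ (other coefficients as before). Then the weakly imposed formulation is energy bounded, i.e. applying the energy method (multiplying each equation by its solution, integrating over its domain and adding) gives an energy rate whose interface contributions are either dissipative or bounded, so time integration of the energy rate yields an energy bound.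
   Context: Transformed (steady-frame) problem: for $\xi\in[\xi_0,\delta]$ (vapour) and $\eta\in[\delta,\eta_n]$ (liquid), $\beta_v((J_v T_v)_\tau + (a_v T_v)_\xi) = k_v (J_v^{-1} T_{v,\xi})_\xi$, $\beta_l((J_l T_l)_\tau + (a_l T_l)_\eta) = k_l (J_l^{-1} T_{l,\eta})_\eta$, with interface condition $T_v=T_l=T_\delta$ at the interface $\delta$, where $T_\delta$ is an externally given evaporation temperature. Here $\beta=\rho C_p$ (density times specific heat), $k_v,k_l>0$ scaled heat conduction coefficients, $J_v,J_l>0$ Jacobians of the moving-to-fixed coordinate transformations, and $a_v=u_v-\tilde u_v$, $a_l=u_l-\tilde u_l$ transformed wave speeds ($\tilde u = x_\tau$ the mesh velocity; $u_v,u_l>0$). At the interface the mass flow rate gives $(u_l)_\delta=\gamma (u_v)_\delta+(1-\gamma)\tilde u_\delta$ with $\gamma=\rho_v/\rho_l$, the interface velocity is $\rho_v h_{lv}\tilde u_\delta=[k_l J_l^{-1}T_{l,\eta}-k_v J_v^{-1}T_{v,\xi}]_\delta$, and hence $(a_v)_\delta=(u_v)_\delta-\tilde u_\delta$, $(a_l)_\delta=\gamma (a_v)_\delta$. Weak imposition of the interface conditions: $\beta_v((J_v T_v)_\tau + (a_v T_v)_\xi) = k_v (J_v^{-1} T_{v,\xi})_\xi + L_\delta(\sigma_v^1(T_v-T_\delta)+\sigma_v^2(T_v-T_l)+\sigma_v^3(\partial/\partial\xi)^T(T_v-T_\delta))$, $\beta_l((J_l T_l)_\tau + (a_l T_l)_\eta)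 = k_l (J_l^{-1} T_{l,\eta})_\eta + L_\delta(\sigma_l^1(T_l-T_\delta)+\sigma_l^2(T_l-T_v)+\sigma_l^3(\partial/\partial\eta)^T(T_l-T_\delta))$, where $L_\delta$ is a lifting operator with $\int \psi L_\delta(\phi)\,dx=(\psi\phi)_\delta$, and the transposed derivative satisfies $\phi(\partial/\partial x)^T=\phi_x$. *)

(* Defs.v *)
From Stdlib Require Import Reals Lra.
Open Scope R_scope.

(* Multiplying the vapour equation by T_v, integrating over [xi_0, delta],
   multiplying the liquid equation by T_l, integrating over [delta, eta_n]
   and adding, the terms evaluated at the interface delta are
   (vapour domain: delta is its right end; liquid domain: its left end)
     - beta_v (a_v)_d T_v^2 / 2 + k_v J_v^{-1} T_v T_{v,xi}
     + sigma_v^1 T_v (T_v - T_d) + sigma_v^2 T_v (T_v - T_l)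
     + sigma_v^3 T_{v,xi} (T_v - T_d)
     + beta_l (a_l)_d T_l^2 / 2 - k_l J_l^{-1} T_l T_{l,eta}
     + sigma_l^1 T_l (T_l - T_d) + sigma_l^2 T_l (T_l - T_v)
     + sigma_l^3 T_{l,eta} (T_l - T_d).
   (The SAT terms come from  int psi L_delta(phi) = (psi phi)_delta  and
    phi (d/dx)^T = phi_x.)  All quantities are interface (delta) values. *)
Definition interface_rate
  (bv bl kv kl Jv Jl av al Td : R)
  (s1v s2v s3v s1l s2l s3l : R)
  (Tv Tl dTv dTl : R) : R :=
    - bv * av * Tv ^ 2 / 2 + kv / Jv * Tv * dTv
    + s1v * Tv * (Tv - Td) + s2v * Tv * (Tv - Tl) + s3v * dTv * (Tv - Td)
    + bl * al * Tl ^ 2 / 2 - kl / Jl * Tl * dTl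
    + s1l * Tl * (Tl - Td) + s2l * Tl * (Tl - Tv) + s3l * dTl * (Tl - Td).

Definition penalty_choice (bv bl kv kl Jv Jl av al sigma : R)
  (s1v s2v s3v s1l s2l s3l : R) : Prop :=
  (av < 0 -> s1v = bv * av /\ s1l = 0) /\
  (av > 0 -> s1v = 0 /\ s1l = - (bl * al)) /\
  (av = 0 -> s1v = 0 /\ s1l = 0) /\
  s2v = - sigma / 2 /\ s2l = - sigma / 2 /\
  s3v = - (kv / Jv) /\ s3l = kl / Jl.

(* Main.v *)
Require Import Defs.
From Stdlib Require Import Reals Lra Psatz.
Open Scope R_scope.

(* rv, rl: densities; cpv, cpl: specific heats (beta = rho * Cp);
   kv, kl: heat conduction coefficients; Jv, Jl: Jacobians at delta;
   uv: vapour velocity at delta; ut: interface (mesh) velocity tilde u_delta;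
   hlv: latent heat; Td: evaporation temperature; sigma >= 0.
   (a_v)_d = uv - ut, (a_l)_d = gamma (a_v)_d, gamma = rv / rl.
   Energy boundedness: the interface contribution to the energy rate is bounded
   above by a quantity B depending only on the data (not on the solution traces
   Tv, Tl, T_{v,xi}, T_{l,eta}), for all traces compatible with the interface
   velocity condition  rv hlv ut = kl/Jl T_{l,eta} - kv/Jv T_{v,xi}. *)
Theorem proposition2
  (rv rl cpv cpl kv kl Jv Jl uv ut hlv Td sigma : R)
  (s1v s2v s3v s1l s2l s3l : R) :
  0 < rv -> 0 < rl -> 0 < cpv -> 0 < cpl -> 0 < kv -> 0 < kl ->
  0 < Jv -> 0 < Jl -> 0 < uv -> 0 <= sigma ->
  penalty_choice (rv * cpv) (rl * cpl) kv kl Jv Jl (uv - ut)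
    (rv / rl * (uv - ut)) sigma s1v s2v s3v s1l s2l s3l ->
  exists B : R, forall Tv Tl dTv dTl : R,
    rv * hlv * ut = kl / Jl * dTl - kv / Jv * dTv ->
    interface_rate (rv * cpv) (rl * cpl) kv kl Jv Jl (uv - ut)
      (rv / rl * (uv - ut)) Td s1v s2v s3v s1l s2l s3l Tv Tl dTv dTl <= B.
Proof.
  intros Hrv Hrl Hcv Hcl Hkv Hkl HJv HJl Huv Hs [P1 [P2 [P3 [E2v [E2l [E3v E3l]]]]]].
  assert (Hg : 0 < rv / rl) by (apply Rdiv_lt_0_compat; lra).
  assert (Hbv : 0 < rv * cpv) by nra.
  assert (Hbl : 0 < rl * cpl) by nra.
  unfold interface_rate.
  set (g := rv / rl) in *. set (Kv := kv / Jv) in *. set (Kl := kl / Jl) in *.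
  set (a := uv - ut) in *.
  clearbody g Kv Kl a.
  destruct (Rtotal_order a 0) as [Ha | [Ha | Ha]].
  - destruct (P1 Ha) as [E1v E1l].
    exists (- Td * (rv * hlv * ut) - rv * cpv * a * Td ^ 2 / 2).
    intros Tv Tl dTv dTl Hu.
    assert (Hu' : Td*(rv*hlv*ut) = Td*(Kl*dTl - Kv*dTv)) by now rewrite Hu.
    subst s1v s1l s2v s2l s3v s3l.
    assert (H1 : 0 <= (Tv - Tl) ^ 2) by apply pow2_ge_0.
    assert (H2 : 0 <= (Tv - Td) ^ 2) by apply pow2_ge_0.
    assert (H3 : 0 <= Tl ^ 2) by apply pow2_ge_0.
    assert (H4 : 0 <= sigma * (Tv - Tl) ^ 2) by (apply Rmult_le_pos; [lra | apply pow2_ge_0]).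
    assert (H5 : 0 <= rv * cpv * (- a) * (Tv - Td) ^ 2).
    { apply Rmult_le_pos; [repeat apply Rmult_le_pos; lra | exact H2]. }
    assert (H6 : 0 <= rl * cpl * (g * (- a)) * Tl ^ 2).
    { apply Rmult_le_pos; [repeat apply Rmult_le_pos; lra | exact H3]. }
    nra.
  - destruct (P3 Ha) as [E1v E1l].
    exists (- Td * (rv * hlv * ut)).
    intros Tv Tl dTv dTl Hu.
    assert (Hu' : Td*(rv*hlv*ut) = Td*(Kl*dTl - Kv*dTv)) by now rewrite Hu.
    subst s1v s1l s2v s2l s3v s3l. rewrite Ha.
    assert (H4 : 0 <= sigma * (Tv - Tl) ^ 2) by (apply Rmult_le_pos; [lra | apply pow2_ge_0]).
    nra.
  - destruct (P2 Ha) as [E1v E1l].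
    exists (- Td * (rv * hlv * ut) + rl * cpl * (g * a) * Td ^ 2 / 2).
    intros Tv Tl dTv dTl Hu.
    assert (Hu' : Td*(rv*hlv*ut) = Td*(Kl*dTl - Kv*dTv)) by now rewrite Hu.
    subst s1v s1l s2v s2l s3v s3l.
    assert (H2 : 0 <= (Tl - Td) ^ 2) by apply pow2_ge_0.
    assert (H3 : 0 <= Tv ^ 2) by apply pow2_ge_0.
    assert (H4 : 0 <= sigma * (Tv - Tl) ^ 2) by (apply Rmult_le_pos; [lra | apply pow2_ge_0]).
    assert (H5 : 0 <= rl * cpl * (g * a) * (Tl - Td) ^ 2).
    { apply Rmult_le_pos; [repeat apply Rmult_le_pos; lra | exact H2]. }
    assert (H6 : 0 <= rv * cpv * a * Tv ^ 2).
    { apply Rmult_le_pos; [repeat apply Rmult_le_pos; lra | exact H3]. }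
    nra.
Qed.
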